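(* There is an absolute constant $C>0$ such that for every integer $d\ge1$, every $\alpha>0$, every $n\ge1$ and all points $v_1,\dots,v_n\in[0,1]^d$, if $T$ is a minimal spanning tree on $v_1,\dots,v_n$ (with respect to Euclidean distance), then \[ \sum_{e\in T}\|e\|^\alpha\le (C\sqrt d)^\alpha\, n^{\max(0,\,1-\alpha/d)}. \]
   Context: A minimal spanning tree (MST) on a finite set of points in a metric space is a spanning tree of the complete graph on those points that minimizes the sum of the edge lengths. $\|e\|$ denotes the Euclidean length of an edge $e$. *)

(* Defs.v *)
From Stdlib Require Import Rdefinitions.
From HB Require Import structures.
From mathcomp Require Import all_boot all_order all_algebra.
From mathcomp Require Import all_classical all_reals.
From mathcomp Require Import Rstruct exp.
Set Implicit Arguments. Unset Strict Implicit. Unset Printing Implicit Defensive.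
Import Order.TTheory GRing.Theory Num.Theory.
Local Open Scope ring_scope.

Definition Rpoint (d : nat) := 'I_d -> R.

Definition edist (d : nat) (x y : Rpoint d) : R :=
  Num.sqrt (\sum_(k < d) (x k - y k) ^+ 2).

(* An edge set of the complete graph on 'I_n: ordered pairs (i, j) with i < j,
   each representing the undirected edge {i, j}. *)
Definition edge_set (n : nat) := {set 'I_n * 'I_n}.

Definition adj (n : nat) (E : edge_set n) : rel 'I_n :=
  fun x y => ((x, y) \in E) || ((y, x) \in E).

Definition connected_graph (n : nat) (E : edge_set n) : bool :=
  [forall x : 'I_n, forall y : 'I_n, connect (adj E) x y].

Definition spanning_tree (n : nat) (E : edge_set n) : Prop :=
  [/\ (forall e, e \in E -> (nat_of_ord e.1 < nat_of_ord e.2)%N),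
      connected_graph E &
      (forall e, e \in E -> ~~ connected_graph (E :\ e))].

Definition tree_length (d n : nat) (v : 'I_n -> Rpoint d) (E : edge_set n) : R :=
  \sum_(e in E) edist (v e.1) (v e.2).

Definition is_MST (d n : nat) (v : 'I_n -> Rpoint d) (T : edge_set n) : Prop :=
  spanning_tree T /\
  forall T' : edge_set n, spanning_tree T' -> tree_length v T <= tree_length v T'.

(* Main.v *)
Require Import Defs.
From Stdlib Require Import Rdefinitions.
From HB Require Import structures.
From mathcomp Require Import all_boot all_order all_algebra.
From mathcomp Require Import all_classical all_reals.
From mathcomp Require Import Rstruct exp.
From mathcomp Require Import lra ring.
Import Order.TTheory GRing.Theory Num.Theory.
Local Open Scope ring_scope.
Set Implicit Arguments. Unset Strict Implicit. Unset Printing Implicit Defensive.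

Section Graph.
Variable n : nat.
Implicit Types (E F : edge_set n) (x y z : 'I_n).

Definition cE E := connect (adj E).

Lemma adj_sym E : symmetric (adj E).
Proof. by move=> x y; rewrite /adj orbC. Qed.

Lemma cE_sym E x y : cE E x y = cE E y x.
Proof. exact: (sym_connect_sym (adj_sym E)). Qed.

Lemma cE_trans E x y z : cE E x y -> cE E y z -> cE E x z.
Proof. exact: connect_trans. Qed.

Lemma cE_refl E x : cE E x x.
Proof. exact: connect0. Qed.

Lemma cE_mono E F x y : E \subset F -> cE E x y -> cE F x y.
Proof.
move=> sEF; apply: connect_sub => u w; rewrite /adj => /orP[] h;
by apply: connect1; rewrite /adj (fintype.subsetP sEF _ h) ?orbT.
Qed.

Lemma adj_split E e x y : adj E x y ->
  adj (E :\ e) x y || [|| (x, y) == e | (y, x) == e].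
Proof.
rewrite /adj !in_setD1.
by case/orP=> ->; rewrite ?andbT ?orbT; case: ((x,y) == e); case: ((y,x) == e);
  rewrite ?orbT.
Qed.

Lemma cE_split E e x y : cE E x y ->
  [|| cE (E :\ e) x y, cE (E :\ e) x e.1 && cE (E :\ e) e.2 y
    | cE (E :\ e) x e.2 && cE (E :\ e) e.1 y].
Proof.

case/connectP=> p pth ->; elim/last_ind: p pth => [|p z IH]; first by rewrite /= cE_refl.
rewrite rcons_path last_rcons => /andP[/IH {}IH /(adj_split e)].
set u := last x p in IH *.
case/orP=> [a|].
  have cuz : cE (E :\ e) u z by apply: connect1.
  case/or3P: IH => [h|/andP[h1 h2]|/andP[h1 h2]].
  - by rewrite (cE_trans h cuz).
  - by rewrite h1 (cE_trans h2 cuz) orbT.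
  - by rewrite h1 (cE_trans h2 cuz) !orbT.
case/orP=> /eqP ee; subst e => /=.
- case/or3P: IH => [h|/andP[h1 h2]|/andP[h1 h2]].
  + by rewrite h cE_refl orbT.
  + by rewrite h1 cE_refl orbT.
  + by rewrite h1 cE_refl.
- case/or3P: IH => [h|/andP[h1 h2]|/andP[h1 h2]].
  + by rewrite h cE_refl !orbT.
  + by rewrite h1 cE_refl.
  + by rewrite h1 cE_refl !orbT.
Qed.

Lemma connected_cE E x y : connected_graph E -> cE E x y.
Proof. by move/forallP/(_ x)/forallP/(_ y). Qed.

Lemma bridge E e : spanning_tree E -> e \in E -> ~~ cE (E :\ e) e.1 e.2.
Proof.
case=> _ conn min eE; apply/negP => c12.
move/negP: (min e eE); apply; apply/forallP => x; apply/forallP => y.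
have := connected_cE x y conn.
apply: connect_sub => u w /(adj_split e) /orP[a|]; first exact: connect1.
case/orP=> /eqP ee; subst e; first exact: c12.
by move: c12; rewrite /= -/(cE _ u w) cE_sym.
Qed.

Lemma side E e z : spanning_tree E -> cE (E :\ e) e.1 z || cE (E :\ e) e.2 z.
Proof.
case=> _ conn _; case/or3P: (cE_split e (connected_cE e.1 z conn)) => [->//|/andP[_ ->]|/andP[_ ->]];
by rewrite ?orbT.
Qed.

End Graph.

Section SumHelp.
Variable K : numDomainType.
Lemma sum_sub (I : finType) (A B : {set I}) (F : I -> K) :
  A \subset B -> (forall i, i \in B -> 0 <= F i) ->
  \sum_(i in A) F i <= \sum_(i in B) F i.
Proof.
move=> sAB F0; rewrite [X in _ <= X](big_setID A).
have -> : B :&: A = A by apply/finset.setIidPr.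
rewrite lerDl sumr_ge0 // => i; rewrite inE => /andP[_]; exact: F0.
Qed.

Lemma sum_setU1_le (I : finType) (a : I) (A : {set I}) (F : I -> K) :
  (forall i, 0 <= F i) -> \sum_(i in a |: A) F i <= F a + \sum_(i in A) F i.
Proof.
move=> F0; case: (boolP (a \in A)) => aA.
- have -> : a |: A = A by apply/finset.setUidPr; rewrite finset.sub1set.
  by rewrite lerDr F0.
- by rewrite big_setU1.
Qed.
End SumHelp.

Lemma edist_ge0 d (x y : Rpoint d) : 0 <= edist x y.
Proof. exact: sqrtr_ge0. Qed.

Lemma edist_sym d (x y : Rpoint d) : edist x y = edist y x.
Proof. by rewrite /edist; congr Num.sqrt; apply: eq_bigr => k _; rewrite -sqrrN opprB. Qed.

Section Cut.
Variables (d n : nat) (v : 'I_n -> Rpoint d) (T : edge_set n).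
Hypothesis mst : is_MST v T.

Definition el (e : 'I_n * 'I_n) := edist (v e.1) (v e.2).

Lemma cut e x y : e \in T -> cE (T :\ e) e.1 x -> cE (T :\ e) e.2 y ->
  el e <= edist (v x) (v y).
Proof.
case: mst => st Tmin eT c1 c2.
have [ord conn tmin] := st.
have hne : x != y.
  apply/eqP => exy; subst y; move/negP: (bridge st eT); apply.
  by apply: cE_trans c1 _; rewrite cE_sym.
pose e' := if (x < y)%N then (x, y) else (y, x).
have e'ord : (e'.1 < e'.2)%N.
  rewrite /e'; case: (ltnP x y) => //= yx.
  by rewrite ltn_neqAle yx andbT val_eqE eq_sym.
have e'adj : adj (e' |: (T :\ e)) x y.
  by rewrite /adj /e'; case: (ltnP x y); rewrite setU11 ?orbT.
pose T' := e' |: (T :\ e).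
have sub1 : T :\ e \subset T' by apply: finset.subsetUr.
have conT' : connected_graph T'.
  apply/forallP => x0; apply/forallP => y0.
  have := connected_cE x0 y0 conn.
  apply: connect_sub => u w /(adj_split e) /orP[a|].
    by apply: connect1; move: a; rewrite /adj => /orP[] h; rewrite (fintype.subsetP sub1 _ h) ?orbT.
  have key : cE T' e.1 e.2.
    apply: cE_trans (cE_mono sub1 c1) _.
    apply: cE_trans (connect1 e'adj) _.
    by rewrite cE_sym; apply: cE_mono sub1 c2.
  by case/orP=> /eqP ee; subst e => //; move: key; rewrite /= -/(cE _ u w) cE_sym.
pose P := fun S : edge_set n => (S \subset T') && connected_graph S.
have PT' : P T' by rewrite /P subxx conT'.
case: (@arg_minnP _ T' P (fun S => #|S|) PT') => S /andP[sST' conS] Smin.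
have stS : spanning_tree S.
  split => //.
  - move=> f fS; have := fintype.subsetP sST' _ fS; rewrite /T' in_setU1 in_setD1.
    by case/orP=> [/eqP->//|/andP[_ /ord]].
  - move=> f fS; apply/negP => cf.
    have := Smin (S :\ f); rewrite /P cf andbT.
    rewrite (fintype.subset_trans _ sST') ?finset.subD1set // => /(_ isT).
    by rewrite (cardsD1 f S) fS ltnn.
have h1 := Tmin S stS.
have h2 : tree_length v S <= tree_length v T'.
  apply: sum_sub => // i _; exact: edist_ge0.
have h3 : tree_length v T' <= el e' + tree_length v (T :\ e).
  apply: sum_setU1_le => i; exact: edist_ge0.
have h4 : tree_length v T = el e + tree_length v (T :\ e).
  by rewrite /tree_length (big_setD1 e eT).
have h5 : el e' = edist (v x) (v y).
  by rewrite /el /e'; case: (ltnP x y) => //= _; rewrite edist_sym.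
move: h1 h2 h3; rewrite h4 h5 => h1 h2 h3.
have := le_trans h1 (le_trans h2 h3).
by rewrite lerD2r.
Qed.
End Cut.

Section Count.
Variables (n : nat) (T : edge_set n) (r : 'I_n).
Hypothesis st : spanning_tree T.

Lemma cE_edge (E : edge_set n) e : e \in E -> cE E e.1 e.2.
Proof. by move=> eE; apply: connect1; rewrite /adj -surjective_pairing eE. Qed.

Lemma cE_ends (E : edge_set n) e u w : e \in E -> u \in [:: e.1; e.2] -> w \in [:: e.1; e.2] -> cE E u w.
Proof.
move=> eE; rewrite !inE => /orP[]/eqP-> /orP[]/eqP->; rewrite ?cE_refl ?cE_edge //.
by rewrite cE_sym cE_edge.
Qed.

Definition phi (e : 'I_n * 'I_n) := if cE (T :\ e) r e.1 then e.2 else e.1.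

Lemma phi_spec e : e \in T -> exists p,
  [/\ phi e \in [:: e.1; e.2], p \in [:: e.1; e.2], cE (T :\ e) r p & ~~ cE (T :\ e) r (phi e)].
Proof.
move=> eT; rewrite /phi; case: ifP => h.
- exists e.1; split; rewrite ?inE ?eqxx ?orbT //.
  apply/negP => h2; move/negP: (bridge st eT); apply.
  by apply: cE_trans h2; rewrite cE_sym.
- exists e.2; split; rewrite ?inE ?eqxx ?orbT ?h //.
  by have := side e r st; rewrite !(cE_sym _ _ r) h.
Qed.

Lemma phi_inj : {in T &, injective phi}.
Proof.
move=> e f eT fT ephi; apply/eqP; apply/negPn/negP => nef.
have [p [ze pe rp nrz]] := phi_spec eT.
have [q [zf qf rq nrz']] := phi_spec fT.
rewrite -ephi in zf nrz'.
have fTe : f \in T :\ e by rewrite in_setD1 eq_sym nef.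
have eTf : e \in T :\ f by rewrite in_setD1 nef.
have s1 : T :\ e :\ f \subset T :\ f.
  by apply/fintype.subsetP => x; rewrite !in_setD1 => /andP[-> /andP[_ ->]].
have s2 : T :\ e :\ f \subset T :\ e by apply: finset.subD1set.
move: rp; rewrite cE_sym => /(cE_split f) /or3P[h|/andP[_ h]|/andP[_ h]].
- move/negP: nrz'; apply; rewrite cE_sym.
  apply: cE_trans (cE_ends eTf ze pe) _; exact: cE_mono s1 h.
- move/negP: nrz; apply; rewrite cE_sym.
  apply: cE_trans (cE_ends fTe zf _) (cE_mono s2 h); by rewrite !inE eqxx orbT.
- move/negP: nrz; apply; rewrite cE_sym.
  apply: cE_trans (cE_ends fTe zf _) (cE_mono s2 h); by rewrite !inE eqxx.
Qed.

Lemma card_tree : (#|T| <= n)%N.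
Proof.
rewrite -(card_in_imset phi_inj).
by apply: leq_trans (max_card _) _; rewrite card_ord.
Qed.
End Count.
Definition sq d (x y : Rpoint d) := \sum_(k < d) (x k - y k) ^+ 2.

Lemma sq_ge0 d (x y : Rpoint d) : 0 <= sq x y.
Proof. by apply: sumr_ge0 => k _; apply: sqr_ge0. Qed.

Lemma edist_sq d (x y : Rpoint d) : edist x y ^+ 2 = sq x y.
Proof. by rewrite /edist sqr_sqrtr // sq_ge0. Qed.

Lemma edist_le d (x y z w : Rpoint d) : (edist x y <= edist z w) = (sq x y <= sq z w).
Proof. by rewrite /edist ler_sqrt // sq_ge0. Qed.

Lemma geom d (a b c e : Rpoint d) :
  sq c e <= sq a b -> sq a b <= sq c b -> sq a b <= sq e b ->
  sq a b / 8 <= \sum_(k < d) ((a k + b k) / 2 - (c k + e k) / 2) ^+ 2.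
Proof.
move=> h1 h2 h3.
have pt k : 4^-1 * (c k - b k) ^+ 2 + 4^-1 * (e k - b k) ^+ 2 - 8^-1 * (c k - e k) ^+ 2
   - 4^-1 * (a k - b k) ^+ 2 <= ((a k + b k) / 2 - (c k + e k) / 2) ^+ 2.
  rewrite -subr_ge0.
  have -> : ((a k + b k) / 2 - (c k + e k) / 2) ^+ 2 -
    (4^-1 * (c k - b k) ^+ 2 + 4^-1 * (e k - b k) ^+ 2 - 8^-1 * (c k - e k) ^+ 2 -
     4^-1 * (a k - b k) ^+ 2) = 2^-1 * ((c k + e k) / 2 - b k - (a k - b k)) ^+ 2.
    by field.
  by apply: mulr_ge0; [lra| apply: sqr_ge0].
apply: le_trans (ler_sum _ (fun k _ => pt k)).
rewrite !sumrB !big_split /= -!mulr_sumr.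
rewrite -/(sq c b) -/(sq e b) -/(sq c e) -/(sq a b).
lra.
Qed.

Section Sep.
Variables (d n : nat) (v : 'I_n -> Rpoint d) (T : edge_set n).
Hypothesis mst : is_MST v T.
Hypothesis d1 : (1 <= d)%N.

Definition mid (e : 'I_n * 'I_n) (k : 'I_d) := (v e.1 k + v e.2 k) / 2%:R.
Definition hw (e : 'I_n * 'I_n) := el v e / (6%:R * Num.sqrt d%:R).

Lemma sq_sym (x y : Rpoint d) : sq x y = sq y x.
Proof. by apply: eq_bigr => k _; rewrite -sqrrN opprB. Qed.

Lemma sep_sum e f : e \in T -> f \in T -> e != f -> el v f <= el v e ->
  sq (v e.1) (v e.2) / 8 <= \sum_(k < d) (mid e k - mid f k) ^+ 2.
Proof.
move=> eT fT nef lfe.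
have st := mst.1.
have fTe : f \in T :\ e by rewrite in_setD1 eq_sym nef.
have cfd : cE (T :\ e) f.1 f.2 := cE_edge fTe.
have hlf : sq (v f.1) (v f.2) <= sq (v e.1) (v e.2) by rewrite -edist_le.
case/orP: (side e f.1 st) => hc.
- (* f on e.1's side: far from e.2 *)
  have hd : cE (T :\ e) e.1 f.2 := cE_trans hc cfd.
  have g1 := cut mst eT hc (cE_refl _ e.2).
  have g2 := cut mst eT hd (cE_refl _ e.2).
  rewrite /el !edist_le in g1 g2.
  exact: geom hlf g1 g2.
- have hd : cE (T :\ e) e.2 f.2 := cE_trans hc cfd.
  have g1 : sq (v e.2) (v e.1) <= sq (v f.1) (v e.1).
    by rewrite sq_sym [X in _ <= X]sq_sym -edist_le; move: (cut mst eT (cE_refl _ e.1) hc).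
  have g2 : sq (v e.2) (v e.1) <= sq (v f.2) (v e.1).
    by rewrite sq_sym [X in _ <= X]sq_sym -edist_le; move: (cut mst eT (cE_refl _ e.1) hd).
  rewrite [X in _ <= X]sq_sym in hlf.
  have := geom hlf g1 g2.
  rewrite (sq_sym (v e.2)) => H; apply: (le_trans H); apply: ler_sum => k _.
  by rewrite /mid (addrC (v e.2 k)).
Qed.

Lemma max_coord (x : 'I_d -> R) : exists k, \sum_(j < d) x j <= d%:R * x k.
Proof.
case: d x d1 => // d' x _.
have [k _ kmax] := @arg_maxP _ _ _ (ord0 : 'I_d'.+1) (fun _ => true) x isT.
exists k; rewrite -[X in X%:R * _](card_ord d'.+1) -sumr_const.
by rewrite mulr_suml; apply: ler_sum => j _; rewrite mul1r; apply: kmax.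
Qed.

Lemma sep e f : e \in T -> f \in T -> e != f ->
  exists k, hw e + hw f <= `|mid e k - mid f k|.
Proof.
have sd : Num.sqrt d%:R ^+ 2 = d%:R :> R by rewrite sqr_sqrtr.
have dpos : 0 < d%:R :> R by rewrite ltr0n.
have spos : 0 < Num.sqrt d%:R :> R.
  by have := sqrtr_gt0 (d%:R : R); rewrite dpos.
wlog lfe : e f / el v f <= el v e.
  move=> W eT fT nef; case: (lerP (el v f) (el v e)) => h; first exact: W.
  have [k hk] := W f e (ltW h) fT eT ltac:(by rewrite eq_sym).
  by exists k; rewrite addrC distrC.
move=> eT fT nef.
have hs := sep_sum eT fT nef lfe.
have [k hk] := max_coord (fun k => (mid e k - mid f k) ^+ 2).
exists k.
have s0 : 0 <= Num.sqrt d%:R :> R := sqrtr_ge0 _.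
have hw0 : forall g, 0 <= hw g.
  move=> g; rewrite /hw /el; apply: divr_ge0; first apply: edist_ge0.
  by apply: mulr_ge0; rewrite ?ler0n.
have h2 : hw e + hw f <= 2%:R * hw e.
  by rewrite mulr2n mulrDl mul1r lerD2l /hw ler_pM2r // invr_gt0 mulr_gt0 ?ltr0n.
suff H : (2%:R * hw e) ^+ 2 <= `|mid e k - mid f k| ^+ 2.
  apply: (le_trans h2).
  have B : 0 <= 2%:R * hw e by apply: mulr_ge0; rewrite ?ler0n ?hw0.
  by move: H; rewrite ler_sqr ?nnegrE ?normr_ge0.
have e2 : el v e ^+ 2 = sq (v e.1) (v e.2) by rewrite /el edist_sq.
have -> : (2%:R * hw e) ^+ 2 = el v e ^+ 2 / (9%:R * Num.sqrt d%:R ^+ 2).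
  rewrite /hw; move: spos; set s := Num.sqrt _ => sp.
  by field; rewrite gt_eqF.
rewrite sd e2 real_normK ?num_real //.
rewrite ler_pdivrMr; last by rewrite mulr_gt0 ?ltr0n.
have H1 := le_trans hs hk.
have L0 := sq_ge0 (v e.1) (v e.2).
move: H1 L0; set L := sq _ _; set Dl := (_ - _) ^+ 2 => H1 L0.
have -> : Dl * (9%:R * d%:R) = 9%:R * (d%:R * Dl) by ring.
move: H1 L0; set Y := d%:R * Dl => H1 L0.
lra.
Qed.
End Sep.
Lemma sum_card_disj (I U : finType) (S : I -> {set U}) (A : {set I}) :
  {in A &, forall i j, i != j -> [disjoint S i & S j]} ->
  \sum_(i in A) #|S i| = #|\bigcup_(i in A) S i|.
Proof.
elim: {A}_.+1 {-2}A (ltnSn #|A|) => // m IH A leA dis.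
case: (set_0Vmem A) => [->|[a aA]]; first by rewrite !big_set0 cards0.
rewrite (big_setD1 a aA) [\bigcup_(i in A) S i](big_setD1 a aA) /=.
have dis' : {in A :\ a &, forall i j, i != j -> [disjoint S i & S j]}.
  by move=> i j; rewrite !in_setD1 => /andP[_ iA] /andP[_ jA]; apply: dis.
rewrite cardsU (IH (A :\ a)) //; last by move: leA; rewrite (cardsD1 a A) aA.
have -> : S a :&: \bigcup_(i in A :\ a) S i = finset.set0.
  apply: disjoint_setI0; apply: bigcup_disjoint => i; rewrite in_setD1 => /andP[ia iA].
  by apply: dis => //; rewrite eq_sym.
by rewrite cards0 subn0.
Qed.

Section Pack.
Variables (d n : nat) (v : 'I_n -> Rpoint d) (T : edge_set n).
Hypotheses (mst : is_MST v T) (d1 : (1 <= d)%N) (vin : forall i k, 0 <= v i k <= 1).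

Lemma sq_le_d i j : sq (v i) (v j) <= d%:R.
Proof.
rewrite -[X in _ <= X%:R](card_ord d) -sumr_const; apply: ler_sum => k _.
have := vin i k; have := vin j k; case/andP=> a b /andP[c e]. nra.
Qed.

Lemma el_le_s e : el v e <= Num.sqrt d%:R.
Proof. by rewrite /el /edist ler_sqrt ?ler0n // sq_le_d. Qed.

Lemma spos : 0 < Num.sqrt d%:R :> R.
Proof. by have := sqrtr_gt0 (d%:R : R); rewrite ltr0n d1. Qed.

Lemma hw_ge0 e : 0 <= hw v e.
Proof. rewrite /hw; apply: divr_ge0; first apply: edist_ge0. by apply: mulr_ge0; rewrite ?ler0n ?ltW ?spos. Qed.

Lemma hw_le e : hw v e <= 6%:R^-1.
Proof.
rewrite /hw ler_pdivrMr ?mulr_gt0 ?ltr0n ?spos // mulrA mulVf ?pnatr_eq0 // mul1r.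
exact: el_le_s.
Qed.

Lemma mid_in e k : 0 <= mid v e k <= 1.
Proof. rewrite /mid; have := vin e.1 k; have := vin e.2 k. lra. Qed.


Definition Ep := [set e in T | 0 < el v e].

Lemma Ep_T e : e \in Ep -> e \in T.
Proof. by rewrite inE => /andP[]. Qed.

Lemma hw_gt0 e : e \in Ep -> 0 < hw v e.
Proof.
rewrite inE => /andP[_ h]; rewrite /hw; apply: divr_gt0 => //.
by apply: mulr_gt0; rewrite ?ltr0n ?spos.
Qed.

Definition Kr := (\sum_(e in Ep) Num.truncn (2%:R / hw v e)).+1.

Lemma Kr_gt0 : 0 < Kr%:R :> R.
Proof. by rewrite ltr0n. Qed.

Lemma hwK e : e \in Ep -> 2%:R <= hw v e * Kr%:R.
Proof.
move=> eE; have h0 := hw_gt0 eE.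
have h1 : 2%:R / hw v e < Kr%:R.
  apply: lt_le_trans (truncnS_gt _) _; rewrite ler_nat /Kr ltnS.
  by rewrite (big_setD1 e eE) /= leq_addr.
by rewrite mulrC -ler_pdivrMr // ltW.
Qed.

Definition Mm e := Num.truncn (hw v e * Kr%:R).

Lemma M_ge e : e \in Ep -> hw v e * Kr%:R / 2%:R <= (Mm e)%:R.
Proof.
move=> eE; have := hwK eE; have := truncnS_gt (hw v e * Kr%:R).
rewrite /Mm -addn1 natrD; set x := hw v e * Kr%:R; set M := (Num.truncn x)%:R.
lra.
Qed.

Lemma M_le e : (Mm e)%:R <= hw v e * Kr%:R.
Proof. by rewrite /Mm truncn_le mulr_ge0 ?hw_ge0 ?ler0n. Qed.

Definition pp e k := (Num.truncn ((mid v e k - hw v e + 1) * Kr%:R)).+1.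

Lemma pp_gt e k : (mid v e k - hw v e + 1) * Kr%:R < (pp e k)%:R.
Proof. exact: truncnS_gt. Qed.

Lemma pp_le e k : (pp e k)%:R <= (mid v e k - hw v e + 1) * Kr%:R + 1.
Proof.
rewrite /pp -addn1 natrD lerD2r truncn_le.
apply: mulr_ge0; rewrite ?ler0n //.
have := mid_in e k; have := hw_le e; lra.
Qed.

Definition NN := (2 * Kr)%N.

Lemma val_bounds e k (j : nat) : (j < Mm e)%N ->
  (mid v e k - hw v e + 1) * Kr%:R < (pp e k + j)%:R /\
  (pp e k + j)%:R <= (mid v e k + 1) * Kr%:R.
Proof.
move=> jM; rewrite natrD; split.
  by apply: lt_le_trans (pp_gt e k) _; rewrite lerDl ler0n.
have hj : (j%:R : R) + 1 <= (Mm e)%:R by rewrite natr1 ler_nat.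
have := pp_le e k; have := M_le e.
move: hj; set M := (Mm e)%:R; set P := (pp e k)%:R; set J := (j%:R : R).
set h := hw v e; set K := (Kr%:R : R); set m := mid v e k.
move=> hj hM hP.
have -> : (m + 1) * K = (m - h + 1) * K + h * K by ring.
lra.
Qed.

Lemma val_lt e k (j : nat) : (j < Mm e)%N -> (pp e k + j < NN.+1)%N.
Proof.
move=> jM; have [_ h] := val_bounds k jM.
rewrite ltnS -(ler_nat R) /NN natrM.
apply: le_trans h _; rewrite ler_pM2r ?Kr_gt0 //.
have := mid_in e k; lra.
Qed.

Definition Phi e (g : {ffun 'I_d -> 'I_(Mm e)}) : {ffun 'I_d -> 'I_NN.+1} :=
  [ffun k => inord (pp e k + g k)].

Lemma Phi_val e g k : (@Phi e g k : nat) = (pp e k + g k)%N.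
Proof. by rewrite /Phi ffunE inordK // val_lt. Qed.

Lemma Phi_inj e : injective (@Phi e).
Proof.
move=> g1 g2 eq; apply/ffunP => k; apply: val_inj.
have := congr1 (fun f : {ffun 'I_d -> 'I_NN.+1} => (f k : nat)) eq.
by rewrite /= !Phi_val => /addnI.
Qed.


Lemma Phi_disj e f : e \in Ep -> f \in Ep -> e != f ->
  [disjoint (@Phi e @: finset.setT) & (@Phi f @: finset.setT)].
Proof.
move=> eE fE nef; rewrite disjoint_subset; apply/fintype.subsetP => x /imsetP[g _ ->].
rewrite inE; apply/negP => /imsetP[g' _ eqg].
have [k hk] := sep mst d1 (Ep_T eE) (Ep_T fE) nef.
have := congr1 (fun f : {ffun 'I_d -> 'I_NN.+1} => (f k : nat)) eqg.
rewrite /= !Phi_val => eqj.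
have [a1 a2] := val_bounds k (ltn_ord (g k)).
have [b1 b2] := val_bounds k (ltn_ord (g' k)).
rewrite eqj in a1 a2.
have K0 := Kr_gt0; have he := hw_ge0 e; have hf := hw_ge0 f.
case: (lerP 0 (mid v e k - mid v f k)) => hs; [rewrite ger0_norm // in hk | rewrite ltr0_norm // in hk].
- have H := lt_le_trans a1 b2; rewrite ltr_pM2r // in H; clear -H hk he hf; lra.
- have H := lt_le_trans b1 a2; rewrite ltr_pM2r // in H; clear -H hk he hf; lra.
Qed.

Lemma pack_nat : (\sum_(e in Ep) (Mm e ^ d) <= NN.+1 ^ d)%N.
Proof.
have -> : (\sum_(e in Ep) (Mm e ^ d) = \sum_(e in Ep) #|@Phi e @: finset.setT|)%N.
  apply: eq_bigr => e _; rewrite card_imset; last exact: Phi_inj.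
  by rewrite cardsT card_ffun !card_ord.
rewrite sum_card_disj; last by move=> e f eE fE; apply: Phi_disj.
by apply: leq_trans (max_card _) _; rewrite card_ffun !card_ord.
Qed.

Lemma pack_hw : \sum_(e in Ep) hw v e ^+ d <= 6%:R ^+ d.
Proof.
have K0 := Kr_gt0.
have A : \sum_(e in Ep) ((Mm e)%:R : R) ^+ d <= (NN.+1)%:R ^+ d.
  have := pack_nat; rewrite -(ler_nat R) natr_sum natrX.
  by under eq_bigr do rewrite natrX.
have B : \sum_(e in Ep) (hw v e * Kr%:R / 2%:R) ^+ d <= \sum_(e in Ep) ((Mm e)%:R : R) ^+ d.
  apply: ler_sum => e eE; apply: lerXn2r; rewrite ?nnegrE ?ler0n ?M_ge //.
  by apply: divr_ge0; rewrite ?ler0n // mulr_ge0 ?hw_ge0 ?ler0n.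
have C : (NN.+1)%:R ^+ d <= (6%:R * (Kr%:R / 2%:R)) ^+ d :> R.
  have P1 : 0 <= 6%:R * (Kr%:R / 2%:R) :> R.
    by apply: mulr_ge0; [rewrite ler0n | apply: divr_ge0; rewrite ler0n].
  apply: lerXn2r; rewrite ?nnegrE ?ler0n ?P1 //.
  have K1 : 1 <= Kr%:R :> R by rewrite ler1n.
  rewrite /NN -natr1 natrM.
  have -> : 6%:R * (Kr%:R / 2%:R) = 3%:R * Kr%:R :> R by field.
  move: K1; set K := Kr%:R; lra.
have D := le_trans B (le_trans A C).
have E : \sum_(e in Ep) (hw v e * Kr%:R / 2%:R) ^+ d = (\sum_(e in Ep) hw v e ^+ d) * (Kr%:R / 2%:R) ^+ d.
  rewrite mulr_suml; apply: eq_bigr => e _; by rewrite -exprMn mulrA.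
rewrite E [X in _ <= X]exprMn in D.
by rewrite ler_pM2r ?exprn_gt0 ?divr_gt0 ?ltr0n in D.
Qed.

Lemma packing : \sum_(e in T) el v e ^+ d <= (36%:R * Num.sqrt d%:R) ^+ d.
Proof.
have sp := spos.
have eq1 : \sum_(e in T) el v e ^+ d = \sum_(e in Ep) el v e ^+ d.
  rewrite (big_setID Ep) /=.
  have -> : T :&: Ep = Ep.
    by apply/finset.setIidPr; apply/fintype.subsetP => e /Ep_T.
  rewrite [X in _ + X]big1 ?addr0 // => e; rewrite finset.in_setD inE => /andP[h eT].
  rewrite eT /= in h.
  have : el v e = 0 by apply/eqP; rewrite eq_le leNgt h /=; apply: edist_ge0.
  by move=> ->; rewrite expr0n; case: d d1.
have eq2 e : el v e = (6%:R * Num.sqrt d%:R) * hw v e.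
  by rewrite /hw; field; rewrite gt_eqF.
rewrite eq1.
under eq_bigr do rewrite eq2 exprMn.
rewrite -mulr_sumr.
have -> : (36%:R * Num.sqrt d%:R) ^+ d = (6%:R * Num.sqrt d%:R) ^+ d * 6%:R ^+ d :> R.
  by rewrite -exprMn; congr (_ ^+ _); ring.
rewrite ler_pM2l ?exprn_gt0 ?mulr_gt0 ?ltr0n //.
exact: pack_hw.
Qed.

End Pack.



Lemma tangent (p x t : R) : 0 < p -> p < 1 -> 0 <= x -> 0 < t ->
  x `^ p <= (1 - p) * t `^ p + p * t `^ (p - 1) * x.
Proof.
move=> p0 p1 x0 t0.
have q0 : 0 < 1 - p by rewrite subr_gt0.
pose a := (x * t `^ (p - 1)) `^ p.
pose b := t `^ (p * (1 - p)).
have a0 : 0 <= a by apply: powR_ge0.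
have b0 : 0 <= b by apply: powR_ge0.
have y0 : 0 <= x * t `^ (p - 1) by rewrite mulr_ge0 ?powR_ge0.
have pi0 : 0 < p^-1 by rewrite invr_gt0.
have qi0 : 0 < (1 - p)^-1 by rewrite invr_gt0.
have pq : p^-1^-1 + (1 - p)^-1^-1 = 1.
  by rewrite !invrK addrC subrK.
have H := conjugate_powR a0 b0 pi0 qi0 pq.
have ab : a * b = x `^ p.
  rewrite /a /b powRM ?powR_ge0 // -powRrM -mulrA -powRD; last by rewrite (gt_eqF t0) implybT.
  by rewrite (_ : (p - 1) * p + p * (1 - p) = 0) ?powRr0 ?mulr1 //; ring.
have aP : a `^ p^-1 / p^-1 = p * t `^ (p - 1) * x.
  rewrite /a -powRrM mulfV ?gt_eqF // powRr1 // invrK; ring.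
have bQ : b `^ (1 - p)^-1 / (1 - p)^-1 = (1 - p) * t `^ p.
  rewrite /b -powRrM -mulrA mulfV ?gt_eqF // mulr1 invrK; ring.
by rewrite -ab addrC -aP -bQ.
Qed.

Unset Implicit Arguments.

Theorem mainTheorem2 :
  exists C : R, 0 < C /\
  forall (d : nat) (alpha : R) (n : nat) (v : 'I_n -> Rpoint d) (T : edge_set n),
    (1 <= d)%N -> 0 < alpha -> (1 <= n)%N ->
    (forall (i : 'I_n) (k : 'I_d), 0 <= v i k <= 1) ->
    is_MST v T ->
    \sum_(e in T) (edist (v e.1) (v e.2)) `^ alpha
      <= (C * Num.sqrt (d%:R)) `^ alpha
         * (n%:R) `^ (Num.max 0 (1 - alpha / d%:R)).
Proof.
exists 36%:R; split; first by rewrite ltr0n.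
move=> d alpha n v T d1 a0 n1 vin mst.
have sp := spos d1.
have s0 := ltW sp.
move: sp s0 (packing mst d1 vin) (el_le_s vin).
set s := Num.sqrt d%:R => sp s0 hpack hle.
have hcard : (#|T| <= n)%N := card_tree (Ordinal n1) mst.1.
have el0 e : 0 <= el v e by apply: edist_ge0.
have dpos : 0 < d%:R :> R by rewrite ltr0n.
change (\sum_(e in T) el v e `^ alpha <= (36%:R * s) `^ alpha * n%:R `^ Num.max 0 (1 - alpha / d%:R)).
case: (lerP d%:R alpha) => had.
- have -> : Num.max 0 (1 - alpha / d%:R) = 0.
    apply: max_l; rewrite subr_le0 ler_pdivlMr // mul1r //.
  rewrite powRr0 mulr1.
  have step e : el v e `^ alpha <= el v e ^+ d * s `^ (alpha - d%:R).
    case: (eqVneq (el v e) 0) => [->|ne].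
      by rewrite powR0 ?(gt_eqF a0) //; apply: mulr_ge0; rewrite ?exprn_ge0 ?powR_ge0.
    rewrite {1}(_ : alpha = d%:R + (alpha - d%:R)); last by rewrite addrC subrK.
    rewrite powRD ?ne ?implybT // powR_mulrn //.
    rewrite ler_wpM2l ?exprn_ge0 //.
    by apply: (ge0_ler_powR (r := alpha - d%:R)); rewrite ?nnegrE ?subr_ge0 ?el0 ?hle ?had.
  apply: le_trans (ler_sum _ (fun e _ => step e)) _.
  rewrite -mulr_suml.
  apply: le_trans (ler_wpM2r (powR_ge0 _ _) hpack) _.
  rewrite exprMn -mulrA -(powR_mulrn d s0) -powRD ?(gt_eqF sp) ?implybT //.
  rewrite addrC subrK powRM ?ler0n //.
  rewrite ler_wpM2r ?powR_ge0 // -powR_mulrn ?ler0n //.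
  by apply: ler_powR; rewrite ?ler1n // ltW.
- set p := alpha / d%:R.
  have p0 : 0 < p by rewrite divr_gt0.
  have p1 : p < 1 by rewrite ltr_pdivrMr // mul1r.
  have -> : Num.max 0 (1 - p) = 1 - p by apply: max_r; rewrite subr_ge0 ltW.
  set B := (36%:R * s) ^+ d.
  have B0 : 0 < B by rewrite exprn_gt0 // mulr_gt0 ?ltr0n.
  have nR : 0 < n%:R :> R by rewrite ltr0n.
  set t := B / n%:R.
  have t0 : 0 < t by rewrite divr_gt0.
  have step e : el v e `^ alpha <= (1 - p) * t `^ p + p * t `^ (p - 1) * el v e ^+ d.
    have -> : el v e `^ alpha = (el v e ^+ d) `^ p.
      rewrite -powR_mulrn // -powRrM; congr (_ `^ _).
      by rewrite /p mulrC divfK // gt_eqF.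
    by apply: tangent; rewrite ?exprn_ge0.
  apply: le_trans (ler_sum _ (fun e _ => step e)) _.
  rewrite big_split /= sumr_const -mulr_sumr.
  have h1 : (1 - p) * t `^ p *+ #|T| <= n%:R * ((1 - p) * t `^ p).
    rewrite -mulr_natl ler_wpM2r ?ler_nat // mulr_ge0 ?powR_ge0 // subr_ge0 ltW //.
  have h2 : p * t `^ (p - 1) * (\sum_(i in T) el v i ^+ d) <= p * t `^ (p - 1) * B.
    by rewrite ler_wpM2l // mulr_ge0 ?powR_ge0 // ltW.
  apply: le_trans (lerD h1 h2) _.
  have -> : p * t `^ (p - 1) * B = n%:R * (p * t `^ p).
    rewrite (_ : B = t * n%:R); last by rewrite /t divfK // gt_eqF.
    by rewrite -(mulr_powRB1 (ltW t0) p0); ring.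
  rewrite -mulrDr (_ : (1 - p) * t `^ p + p * t `^ p = t `^ p); last by ring.
  rewrite /t powRM ?invr_ge0 ?ler0n ?(ltW B0) // /B.
  rewrite -powR_mulrn ?mulr_ge0 ?ler0n // -powRrM (_ : d%:R * p = alpha); last first.
    by rewrite /p mulrC divfK // gt_eqF.
  rewrite mulrCA; apply: ler_wpM2l; first exact: powR_ge0.
  rewrite -(powR_inv1 (ltW nR)) -powRrM -[X in X * _](powRr1 (ltW nR)) -powRD; last first.
    by rewrite (gt_eqF nR) implybT.
  by rewrite mulN1r.
Qed.
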